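(* Use of the Euler-Poincar\'e (EP) theorem yields the following Kelvin circulation theorem \begin{align} \frac{d}{dt}\oint_{c(\mathbf{\widehat v})} \big( \mathbf{\widehat{v}}\cdot d\mathbf{r} + \sigma^2\widehat{w}\,d\zeta\big) = - \oint_{c(\mathbf{\widehat v})} \frac{1}{\rho}d{\widetilde p}\,. \end{align}
   Context: Setting: a 2D free surface model (composition of maps) in which the horizontal current is a flow map $\phi_t:\mathbb{R}^2\to\mathbb{R}^2$ with velocity $\mathbf{\widehat v}(\mathbf{r},t)$, and the wave is a vertical elevation $\zeta(\mathbf{r},t)$ carried by the current, with vertical velocity $\widehat{w} = \partial_t\zeta + \mathbf{\widehat{v}}\cdot\nabla_{\mathbf{r}}\zeta$. The dynamics follow from Hamilton's principle $0=\delta\int_a^b \ell\,dt$ with $\ell(\mathbf{\widehat{v}},\zeta,D,\rho)=\int_{\cal D}\Big( \tfrac{1}{2}\big( |\mathbf{\widehat{v}}|^2 + \sigma^2\widehat w^2 \big) - \tfrac{\rho_{ref}}{\rho} \tfrac{\zeta^2}{2Fr^2} \Big) D\rho - p(D-1)\,d^2r$, where $\sigma^2$ (squared aspect ratio) and $Fr^2$ (squared Froude number) are dimensionless constants, $\rho_{ref}$ is a constant reference density, the areal density $D\,d^2r$ and buoyancy $\rho$ are advected by $\mathbf{\widehat v}$ ($\partial_t D + \mathrm{div}(D\mathbf{\widehat v})=0$, $\partial_t\rho+\mathbf{\widehat v}\cdot\nabla\rho=0$), and the pressure $p$ is a Lagrange multiplier enforcing $D=1$, i.e. $\mathrm{div}\,\mathbf{\widehat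 v}=0$. Here $\widetilde p := p + \rho_{ref}\zeta^2/(2Fr^2)$, and $c(\mathbf{\widehat v})$ is a closed loop moving with the horizontal flow velocity $\mathbf{\widehat v}$. *)

(* Defs.v *)
From Stdlib Require Import Reals List.
From Coquelicot Require Import Coquelicot.
Open Scope R_scope.

(* A scalar field on space-time: (x, y, t) |-> f x y t, with (x,y) in R^2. *)
Definition field := R -> R -> R -> R.

Definition dx (f : field) : field := fun x y t => Derive (fun a => f a y t) x.
Definition dy (f : field) : field := fun x y t => Derive (fun b => f x b t) y.
Definition dt (f : field) : field := fun x y t => Derive (fun s => f x y s) t.

Definition pd (i : nat) (f : field) : field :=
  match i with 0%nat => dx f | 1%nat => dy f | _ => dt f end.

Definition ex_pd (i : nat) (f : field) (x y t : R) : Prop :=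
  match i with
  | 0%nat => ex_derive (fun a => f a y t) x
  | 1%nat => ex_derive (fun b => f x b t) y
  | _ => ex_derive (fun s => f x y s) t
  end.

Fixpoint iter_pd (l : list nat) (f : field) : field :=
  match l with nil => f | i :: l' => pd i (iter_pd l' f) end.

Definition smooth3 (f : field) : Prop :=
  forall (l : list nat) (x y t : R),
    (forall i, ex_pd i (iter_pd l f) x y t) /\
    continuous (fun q : R * R * R => iter_pd l f (fst (fst q)) (snd (fst q)) (snd q)) (x, y, t).

Definition smooth1 (g : R -> R) : Prop := forall (n : nat) (s : R), ex_derive_n g n s.

Definition w_of (v1 v2 zeta : field) : field :=
  fun x y t => dt zeta x y t + v1 x y t * dx zeta x y t + v2 x y t * dy zeta x y t.

Definition ptilde (rhoref Fr2 : R) (p zeta : field) : field :=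
  fun x y t => p x y t + rhoref * (zeta x y t) ^ 2 / (2 * Fr2).

(* Variational derivatives of
   l = int ( 1/2 (|v|^2 + sigma^2 w^2) - (rho_ref/rho) zeta^2/(2 Fr^2) ) D rho - p (D - 1). *)
(* delta l / delta v  (components) *)
Definition m1 (sigma2 : R) (v1 v2 zeta rho D : field) : field :=
  fun x y t => D x y t * rho x y t *
               (v1 x y t + sigma2 * w_of v1 v2 zeta x y t * dx zeta x y t).
Definition m2 (sigma2 : R) (v1 v2 zeta rho D : field) : field :=
  fun x y t => D x y t * rho x y t *
               (v2 x y t + sigma2 * w_of v1 v2 zeta x y t * dy zeta x y t).
Definition dl_dD (sigma2 rhoref Fr2 : R) (v1 v2 zeta rho p : field) : field :=
  fun x y t => / 2 * rho x y t * ((v1 x y t) ^ 2 + (v2 x y t) ^ 2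
                                   + sigma2 * (w_of v1 v2 zeta x y t) ^ 2)
               - rhoref * (zeta x y t) ^ 2 / (2 * Fr2) - p x y t.
Definition dl_drho (sigma2 : R) (v1 v2 zeta D : field) : field :=
  fun x y t => D x y t * (/ 2 * ((v1 x y t) ^ 2 + (v2 x y t) ^ 2
                                   + sigma2 * (w_of v1 v2 zeta x y t) ^ 2)).

(* Euler-Poincare equations (with advected quantities D d^2r and rho) for this l:
   (d_t + L_v)(m . dr (x) d^2r) = D grad(dl/dD) - (dl/drho) grad rho,
   written in coordinates, together with the zeta Euler-Lagrange equation
   (delta l / delta zeta = 0), the advection laws and the constraint D = 1. *)
Definition EP_equations (sigma2 rhoref Fr2 : R) (v1 v2 zeta rho D p : field) : Prop :=
  let m1f := m1 sigma2 v1 v2 zeta rho D in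
  let m2f := m2 sigma2 v1 v2 zeta rho D in
  let lD := dl_dD sigma2 rhoref Fr2 v1 v2 zeta rho p in
  let lr := dl_drho sigma2 v1 v2 zeta D in
  let w := w_of v1 v2 zeta in
  forall x y t,
    dt m1f x y t + dx (fun a b s => v1 a b s * m1f a b s) x y t
      + dy (fun a b s => v2 a b s * m1f a b s) x y t
      + m1f x y t * dx v1 x y t + m2f x y t * dx v2 x y t
    = D x y t * dx lD x y t - lr x y t * dx rho x y t
    /\
    dt m2f x y t + dx (fun a b s => v1 a b s * m2f a b s) x y t
      + dy (fun a b s => v2 a b s * m2f a b s) x y t
      + m1f x y t * dy v1 x y t + m2f x y t * dy v2 x y t
    = D x y t * dy lD x y t - lr x y t * dy rho x y t
    /\
    (* delta l / delta zeta = 0 *)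
    sigma2 * D x y t * rho x y t
      * (dt w x y t + v1 x y t * dx w x y t + v2 x y t * dy w x y t)
    = - rhoref * D x y t * zeta x y t / Fr2
    /\
    (* advection of the areal density D d^2r *)
    dt D x y t + dx (fun a b s => D a b s * v1 a b s) x y t
      + dy (fun a b s => D a b s * v2 a b s) x y t = 0
    /\
    dt rho x y t + v1 x y t * dx rho x y t + v2 x y t * dy rho x y t = 0
    /\
    (* constraint enforced by the pressure multiplier *)
    D x y t = 1.

Definition is_flow (v1 v2 phi1 phi2 : field) : Prop :=
  forall X Y t,
    phi1 X Y 0 = X /\ phi2 X Y 0 = Y /\
    is_derive (fun s => phi1 X Y s) t (v1 (phi1 X Y t) (phi2 X Y t) t) /\
    is_derive (fun s => phi2 X Y s) t (v2 (phi1 X Y t) (phi2 X Y t) t).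

Definition loop1 (phi1 : field) (c01 c02 : R -> R) (t s : R) : R := phi1 (c01 s) (c02 s) t.
Definition loop2 (phi2 : field) (c01 c02 : R -> R) (t s : R) : R := phi2 (c01 s) (c02 s) t.

Definition circulation (sigma2 : R) (v1 v2 zeta phi1 phi2 : field) (c01 c02 : R -> R)
  (t : R) : R :=
  RInt (fun s =>
          let X := loop1 phi1 c01 c02 t s in
          let Y := loop2 phi2 c01 c02 t s in
          v1 X Y t * Derive (fun r => loop1 phi1 c01 c02 t r) s
          + v2 X Y t * Derive (fun r => loop2 phi2 c01 c02 t r) s
          + sigma2 * w_of v1 v2 zeta X Y t
              * Derive (fun r => zeta (loop1 phi1 c01 c02 t r) (loop2 phi2 c01 c02 t r) t) s)
       0 1.

Definition loop_int_inv_rho_d (rho q phi1 phi2 : field) (c01 c02 : R -> R) (t : R) : R :=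
  RInt (fun s =>
          / rho (loop1 phi1 c01 c02 t s) (loop2 phi2 c01 c02 t s) t
          * Derive (fun r => q (loop1 phi1 c01 c02 t r) (loop2 phi2 c01 c02 t r) t) s)
       0 1.

(* Main.v *)
Require Import Defs.
From Stdlib Require Import Reals Lra FunctionalExtensionality List.
From Coquelicot Require Import Coquelicot.
Open Scope R_scope.

Definition cont3 (f : field) := forall x y t,
  continuous (fun q : R * R * R => f (fst (fst q)) (snd (fst q)) (snd q)) (x, y, t).

Lemma ball_R (x e y : R) : ball x e y <-> Rabs (y - x) < e.
Proof. unfold ball; simpl. unfold AbsRing_ball, abs, minus, plus, opp; simpl. tauto. Qed.

Lemma cplus {U : UniformSpace} (f g : U -> R) z :
  continuous f z -> continuous g z -> continuous (fun x => f x + g x) z.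
Proof. intros. exact (@continuous_plus U R_AbsRing R_NormedModule f g z H H0). Qed.

Lemma cmult {U : UniformSpace} (f g : U -> R) z :
  continuous f z -> continuous g z -> continuous (fun x => f x * g x) z.
Proof. intros. exact (@continuous_mult U R_AbsRing f g z H H0). Qed.

Lemma cconst {U : UniformSpace} (c : R) (z : U) : continuous (fun _ => c) z.
Proof. apply continuous_const. Qed.

Lemma cinv {U : UniformSpace} (f : U -> R) z :
  continuous f z -> f z <> 0 -> continuous (fun x => / f x) z.
Proof.
  intros Hf Hn. apply (continuous_comp f (fun x => / x)); auto.
  apply continuous_Rinv; auto.
Qed.

Lemma cpair {U : UniformSpace} {V W : UniformSpace} (a : U -> V) (b : U -> W) z :
  continuous a z -> continuous b z -> continuous (fun z => (a z, b z)) z.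
Proof.
  intros Ha Hb.
  apply (continuous_comp_2 a b (fun p r => (p, r))); auto.
  assert (E : (fun x0 : V * W => (fst x0, snd x0)) = (fun x => x)).
  { apply functional_extensionality. intros [u v]. reflexivity. }
  rewrite E. apply continuous_id.
Qed.

Lemma cont3_comp {U : UniformSpace} (f : field) (a b c : U -> R) (z : U) :
  cont3 f -> continuous a z -> continuous b z -> continuous c z ->
  continuous (fun z => f (a z) (b z) (c z)) z.
Proof.
  intros Hf Ha Hb Hc.
  apply (continuous_comp (fun z => ((a z, b z), c z))
           (fun q : R * R * R => f (fst (fst q)) (snd (fst q)) (snd q))).
  - apply cpair; auto. apply cpair; auto.
  - apply Hf.
Qed.

Lemma cfst {U V : UniformSpace} (z : U * V) : continuous fst z.
Proof. destruct z. apply continuous_fst. Qed.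
Lemma csnd {U V : UniformSpace} (z : U * V) : continuous snd z.
Proof. destruct z. apply continuous_snd. Qed.

Lemma cara (F phi : R -> R) (r0 : R) :
  (forall r, F r - F r0 = phi r * (r - r0)) -> continuous phi r0 -> is_derive F r0 (phi r0).
Proof.
  intros HF Hc. apply is_derive_Reals. intros eps Heps.
  destruct (proj1 (filterlim_locally phi (phi r0)) Hc (mkposreal eps Heps)) as [d Hd].
  exists d. intros h Hh Hhd.
  assert (E: (F (r0 + h) - F r0) / h = phi (r0 + h)).
  { rewrite HF. replace (r0 + h - r0) with h by ring. field. auto. }
  rewrite E. apply ball_R. apply Hd. apply ball_R. replace (r0 + h - r0) with h by ring. auto.
Qed.

Definition slope (a : R -> R) (r0 a' : R) (r : R) : R :=
  if Req_EM_T r r0 then a' else (a r - a r0) / (r - r0).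

Lemma slope_cont (a : R -> R) (r0 a' : R) : is_derive a r0 a' ->
  continuous (slope a r0 a') r0.
Proof.
  intros Ha. apply is_derive_Reals in Ha.
  apply filterlim_locally. intros eps.
  destruct (Ha eps (cond_pos eps)) as [d Hd].
  exists d. intros y Hy. change R in y. apply ball_R. apply ball_R in Hy. unfold slope.
  destruct (Req_EM_T r0 r0) as [_|n]; [|congruence].
  destruct (Req_EM_T y r0) as [->|ny].
  - rewrite Rminus_eq_0, Rabs_R0. apply cond_pos.
  - specialize (Hd (y - r0)). replace (r0 + (y - r0)) with y in Hd by ring. apply Hd; auto.
    intro. apply ny. lra.
Qed.

Lemma slope_eq (a : R -> R) (r0 a' : R) r : a r - a r0 = slope a r0 a' r * (r - r0).
Proof.
  unfold slope. destruct (Req_EM_T r r0) as [e|n].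
  - subst. ring.
  - field. lra.
Qed.

Lemma slope_r0 (a : R -> R) (r0 a' : R) : slope a r0 a' r0 = a'.
Proof. unfold slope. destruct (Req_EM_T r0 r0); congruence. Qed.

Lemma quot_lemma (H dH : R -> R -> R) (A : R -> R) (r0 : R) :
  (forall r z, is_derive (fun z => H z r) z (dH z r)) ->
  exists q : R -> R,
    (forall r, H (A r) r - H (A r0) r = q r * (A r - A r0)) /\
    (forall r, exists xi, Rabs (xi - A r0) <= Rabs (A r - A r0) /\ q r = dH xi r) /\
    q r0 = dH (A r0) r0.
Proof.
  intros HH.
  exists (fun r => if Req_EM_T (A r) (A r0) then dH (A r0) r
           else (H (A r) r - H (A r0) r) / (A r - A r0)).
  split; [|split].
  - intros r. destruct (Req_EM_T (A r) (A r0)) as [e|n].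
    + rewrite e; ring.
    + field. lra.
  - intros r. destruct (Req_EM_T (A r) (A r0)) as [e|n].
    + exists (A r0). rewrite Rminus_eq_0, Rabs_R0. split; [apply Rabs_pos|reflexivity].
    + destruct (MVT_gen (fun z => H z r) (A r0) (A r) (fun z => dH z r)) as [xi [Hxi Heq]].
      * intros; apply HH.
      * intros x _; apply continuity_pt_filterlim; apply (ex_derive_continuous (fun z => H z r)); exists (dH x r); apply HH.
      * exists xi. split.
        -- unfold Rmin, Rmax in Hxi. destruct (Rle_dec (A r0) (A r));
           unfold Rabs; destruct (Rcase_abs (xi - A r0)); destruct (Rcase_abs (A r - A r0)); lra.
        -- simpl in Heq. rewrite Heq. field. lra.
  - destruct (Req_EM_T (A r0) (A r0)); [reflexivity|congruence].
Qed.

Lemma cont_from_near (q : R -> R) (g : R * R * R -> R) (r0 : R) (p0 : R * R * R) :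
  continuous g p0 -> q r0 = g p0 ->
  (forall d : posreal, locally r0 (fun r => exists p, ball p0 d p /\ q r = g p)) ->
  continuous q r0.
Proof.
  intros Hg Hq Hn. apply filterlim_locally. intros eps. rewrite Hq.
  destruct (proj1 (filterlim_locally g (g p0)) Hg eps) as [d Hd].
  eapply filter_imp; [|apply (Hn d)]. intros r [p [Hp Hr]]. rewrite Hr. apply Hd, Hp.
Qed.

Lemma ball3 (a b c x y z : R) (d : R) :
  Rabs (x - a) < d -> Rabs (y - b) < d -> Rabs (z - c) < d ->
  ball (a, b, c) d (x, y, z).
Proof. intros. repeat split; apply ball_R; auto. Qed.

Lemma near_cont (a : R -> R) r0 (d : posreal) : continuous a r0 ->
  locally r0 (fun r => Rabs (a r - a r0) < d).
Proof.
  intros Ha. eapply filter_imp; [|apply (proj1 (filterlim_locally a (a r0)) Ha d)].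
  intros r Hr. apply ball_R in Hr. auto.
Qed.
Lemma is_derive_eq (f : R -> R) (x l l' : R) : is_derive f x l -> @eq R l l' -> is_derive f x l'.
Proof. intros H ->; exact H. Qed.

Lemma deriv_cont (a : R -> R) r0 a' : is_derive a r0 a' -> continuous a r0.
Proof. intros H. apply (ex_derive_continuous a). exists a'. exact H. Qed.

Lemma chain3 (f : field) (a b c : R -> R) (r0 a' b' c' : R) :
  (forall i x y t, ex_pd i f x y t) -> cont3 (dx f) -> cont3 (dy f) -> cont3 (dt f) ->
  is_derive a r0 a' -> is_derive b r0 b' -> is_derive c r0 c' ->
  is_derive (fun r => f (a r) (b r) (c r)) r0
    (dx f (a r0) (b r0) (c r0) * a' + dy f (a r0) (b r0) (c r0) * b'
     + dt f (a r0) (b r0) (c r0) * c').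
Proof.
  intros Hex Hcx Hcy Hct Ha Hb Hc.
  assert (Ca : continuous a r0) by (eapply deriv_cont; eauto).
  assert (Cb : continuous b r0) by (eapply deriv_cont; eauto).
  assert (Cc : continuous c r0) by (eapply deriv_cont; eauto).
  destruct (quot_lemma (fun z r => f z (b r) (c r)) (fun z r => dx f z (b r) (c r)) a r0)
    as [q1 [E1 [X1 V1]]].
  { intros r z. apply Derive_correct. apply (Hex 0%nat). }
  destruct (quot_lemma (fun z r => f (a r0) z (c r)) (fun z r => dy f (a r0) z (c r)) b r0)
    as [q2 [E2 [X2 V2]]].
  { intros r z. apply Derive_correct. apply (Hex 1%nat). }
  destruct (quot_lemma (fun z r => f (a r0) (b r0) z) (fun z r => dt f (a r0) (b r0) z) c r0)
    as [q3 [E3 [X3 V3]]].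
  { intros r z. apply Derive_correct. apply (Hex 2%nat). }
  simpl in E1, E2, E3, X1, X2, X3, V1, V2, V3.
  set (phi := fun r => q1 r * slope a r0 a' r + q2 r * slope b r0 b' r + q3 r * slope c r0 c' r).
  apply (is_derive_eq _ _ (phi r0)).
  - apply cara.
    + intros r.
      specialize (E1 r); specialize (E2 r); specialize (E3 r).
      rewrite (slope_eq a r0 a' r) in E1. rewrite (slope_eq b r0 b' r) in E2.
      rewrite (slope_eq c r0 c' r) in E3.
      unfold phi. lra.
    + unfold phi. apply cplus; [apply cplus|]; apply cmult.
      * apply cont_from_near with (g := fun q => dx f (fst (fst q)) (snd (fst q)) (snd q))
          (p0 := (a r0, b r0, c r0)); [apply Hcx| simpl; exact V1|].
        intros d. eapply filter_imp; [|apply filter_and; [apply (near_cont a r0 d Ca)|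
          apply filter_and; [apply (near_cont b r0 d Cb)|apply (near_cont c r0 d Cc)]]].
        intros r [h1 [h2 h3]]. destruct (X1 r) as [xi [Hxi Hq]].
        exists (xi, b r, c r). split; [apply ball3; lra | exact Hq].
      * apply slope_cont; auto.
      * apply cont_from_near with (g := fun q => dy f (fst (fst q)) (snd (fst q)) (snd q))
          (p0 := (a r0, b r0, c r0)); [apply Hcy| simpl; exact V2|].
        intros d. eapply filter_imp; [|apply filter_and; [apply (near_cont b r0 d Cb)|
          apply (near_cont c r0 d Cc)]].
        intros r [h2 h3]. destruct (X2 r) as [xi [Hxi Hq]].
        exists (a r0, xi, c r). split; [apply ball3; try lra | exact Hq].
        rewrite Rminus_eq_0, Rabs_R0. apply cond_pos.
      * apply slope_cont; auto.
      * apply cont_from_near with (g := fun q => dt f (fst (fst q)) (snd (fst q)) (snd q))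
          (p0 := (a r0, b r0, c r0)); [apply Hct| simpl; exact V3|].
        intros d. eapply filter_imp; [|apply (near_cont c r0 d Cc)].
        intros r h3. destruct (X3 r) as [xi [Hxi Hq]].
        exists (a r0, b r0, xi). split; [apply ball3; try lra | exact Hq];
        rewrite Rminus_eq_0, Rabs_R0; apply cond_pos.
      * apply slope_cont; auto.
  - unfold phi. rewrite V1, V2, V3, !slope_r0. reflexivity.
Qed.

Definition C1 (f : field) :=
  cont3 f /\ (forall i x y t, ex_pd i f x y t) /\ (forall i, cont3 (pd i f)).

Lemma iter_pd_app l i f : iter_pd l (pd i f) = iter_pd (l ++ i :: nil) f.
Proof. induction l; simpl; congruence. Qed.

Lemma smooth_pd i f : smooth3 f -> smooth3 (pd i f).
Proof. intros H l x y t. rewrite iter_pd_app. apply H. Qed.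

Lemma smooth_C1 f : smooth3 f -> C1 f.
Proof.
  intros H. split; [|split].
  - intros x y t. exact (proj2 (H nil x y t)).
  - intros i x y t. exact (proj1 (H nil x y t) i).
  - intros i x y t. exact (proj2 (H (i :: nil) x y t)).
Qed.

Lemma cont3_plus f g : cont3 f -> cont3 g -> cont3 (fun x y t => f x y t + g x y t).
Proof. intros Hf Hg x y t. apply cplus; [apply Hf|apply Hg]. Qed.
Lemma cont3_minus f g : cont3 f -> cont3 g -> cont3 (fun x y t => f x y t - g x y t).
Proof.
  intros Hf Hg x y t. unfold Rminus. apply cplus; [apply Hf|].
  assert (E : (fun q : R * R * R => - g (fst (fst q)) (snd (fst q)) (snd q))
            = (fun q => (-1) * g (fst (fst q)) (snd (fst q)) (snd q))).
  { apply functional_extensionality; intros; ring. }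
  simpl. rewrite E. apply cmult; [apply cconst|apply Hg].
Qed.
Lemma cont3_mult f g : cont3 f -> cont3 g -> cont3 (fun x y t => f x y t * g x y t).
Proof. intros Hf Hg x y t. apply cmult; [apply Hf|apply Hg]. Qed.
Lemma cont3_const c : cont3 (fun _ _ _ => c).
Proof. intros x y t. apply cconst. Qed.
Lemma cont3_inv f : cont3 f -> (forall x y t, f x y t <> 0) -> cont3 (fun x y t => / f x y t).
Proof. intros Hf Hn x y t. apply cinv; [apply Hf|apply Hn]. Qed.

Lemma pd_plus i f g x y t : ex_pd i f x y t -> ex_pd i g x y t ->
  pd i (fun a b c => f a b c + g a b c) x y t = pd i f x y t + pd i g x y t.
Proof. destruct i as [|[|i]]; simpl; unfold dx, dy, dt; intros; apply Derive_plus; auto. Qed.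
Lemma pd_minus i f g x y t : ex_pd i f x y t -> ex_pd i g x y t ->
  pd i (fun a b c => f a b c - g a b c) x y t = pd i f x y t - pd i g x y t.
Proof. destruct i as [|[|i]]; simpl; unfold dx, dy, dt; intros; apply Derive_minus; auto. Qed.
Lemma pd_mult i f g x y t : ex_pd i f x y t -> ex_pd i g x y t ->
  pd i (fun a b c => f a b c * g a b c) x y t = pd i f x y t * g x y t + f x y t * pd i g x y t.
Proof.
  destruct i as [|[|i]]; simpl; unfold dx, dy, dt; intros.
  - exact (Derive_mult (fun a => f a y t) (fun a => g a y t) x H H0).
  - exact (Derive_mult (fun a => f x a t) (fun a => g x a t) y H H0).
  - exact (Derive_mult (fun a => f x y a) (fun a => g x y a) t H H0).
Qed.
Lemma pd_const i c x y t : pd i (fun _ _ _ => c) x y t = 0.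
Proof. destruct i as [|[|i]]; simpl; unfold dx, dy, dt; apply Derive_const. Qed.

Lemma ex_pd_plus i f g x y t : ex_pd i f x y t -> ex_pd i g x y t ->
  ex_pd i (fun a b c => f a b c + g a b c) x y t.
Proof.
  destruct i as [|[|i]]; simpl; intros.
  - exact (ex_derive_plus (fun a => f a y t) (fun a => g a y t) x H H0).
  - exact (ex_derive_plus (fun a => f x a t) (fun a => g x a t) y H H0).
  - exact (ex_derive_plus (fun a => f x y a) (fun a => g x y a) t H H0).
Qed.
Lemma ex_pd_minus i f g x y t : ex_pd i f x y t -> ex_pd i g x y t ->
  ex_pd i (fun a b c => f a b c - g a b c) x y t.
Proof.
  destruct i as [|[|i]]; simpl; intros.
  - exact (ex_derive_minus (fun a => f a y t) (fun a => g a y t) x H H0).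
  - exact (ex_derive_minus (fun a => f x a t) (fun a => g x a t) y H H0).
  - exact (ex_derive_minus (fun a => f x y a) (fun a => g x y a) t H H0).
Qed.
Lemma ex_pd_mult i f g x y t : ex_pd i f x y t -> ex_pd i g x y t ->
  ex_pd i (fun a b c => f a b c * g a b c) x y t.
Proof.
  destruct i as [|[|i]]; simpl; intros.
  - exact (ex_derive_mult (fun a => f a y t) (fun a => g a y t) x H H0).
  - exact (ex_derive_mult (fun a => f x a t) (fun a => g x a t) y H H0).
  - exact (ex_derive_mult (fun a => f x y a) (fun a => g x y a) t H H0).
Qed.
Lemma ex_pd_const i c x y t : ex_pd i (fun _ _ _ => c) x y t.
Proof. destruct i as [|[|i]]; simpl; apply ex_derive_const. Qed.

Ltac fext := apply functional_extensionality; intro; apply functional_extensionality; intro;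
             apply functional_extensionality; intro.

Lemma C1_plus f g : C1 f -> C1 g -> C1 (fun x y t => f x y t + g x y t).
Proof.
  intros [Cf [Ef Pf]] [Cg [Eg Pg]]. split; [|split].
  - apply cont3_plus; auto.
  - intros; apply ex_pd_plus; auto.
  - intros i. assert (E : pd i (fun x y t => f x y t + g x y t) = fun x y t => pd i f x y t + pd i g x y t).
    { fext. apply pd_plus; auto. }
    rewrite E. apply cont3_plus; auto.
Qed.
Lemma C1_minus f g : C1 f -> C1 g -> C1 (fun x y t => f x y t - g x y t).
Proof.
  intros [Cf [Ef Pf]] [Cg [Eg Pg]]. split; [|split].
  - apply cont3_minus; auto.
  - intros; apply ex_pd_minus; auto.
  - intros i. assert (E : pd i (fun x y t => f x y t - g x y t) = fun x y t => pd i f x y t - pd i g x y t).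
    { fext. apply pd_minus; auto. }
    rewrite E. apply cont3_minus; auto.
Qed.
Lemma C1_mult f g : C1 f -> C1 g -> C1 (fun x y t => f x y t * g x y t).
Proof.
  intros [Cf [Ef Pf]] [Cg [Eg Pg]]. split; [|split].
  - apply cont3_mult; auto.
  - intros; apply ex_pd_mult; auto.
  - intros i. assert (E : pd i (fun x y t => f x y t * g x y t)
                          = fun x y t => pd i f x y t * g x y t + f x y t * pd i g x y t).
    { fext. apply pd_mult; auto. }
    rewrite E. apply cont3_plus; apply cont3_mult; auto.
Qed.
Lemma C1_const c : C1 (fun _ _ _ => c).
Proof.
  split; [|split].
  - apply cont3_const.
  - intros; apply ex_pd_const.
  - intros i. assert (E : pd i (fun _ _ _ => c) = fun _ _ _ => 0).
    { fext. apply pd_const. }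
    rewrite E. apply cont3_const.
Qed.

Ltac C1_tac := repeat first [ assumption | apply C1_const | apply C1_plus | apply C1_minus | apply C1_mult ].

Lemma momentum_gen (i : nat) (v1 v2 rho u u1 u2 K pt : field) (x y t : R) :
  C1 v1 -> C1 v2 -> C1 rho -> C1 u -> C1 K -> C1 pt ->
  dt (fun a b c => rho a b c * u a b c) x y t
  + dx (fun a b s => v1 a b s * (rho a b s * u a b s)) x y t
  + dy (fun a b s => v2 a b s * (rho a b s * u a b s)) x y t
  + rho x y t * u1 x y t * pd i v1 x y t + rho x y t * u2 x y t * pd i v2 x y t
  = 1 * pd i (fun a b c => rho a b c * K a b c - pt a b c) x y t - K x y t * pd i rho x y t ->
  dx v1 x y t + dy v2 x y t = 0 ->
  dt rho x y t + v1 x y t * dx rho x y t + v2 x y t * dy rho x y t = 0 ->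
  rho x y t <> 0 ->
  dt u x y t + v1 x y t * dx u x y t + v2 x y t * dy u x y t
  + u1 x y t * pd i v1 x y t + u2 x y t * pd i v2 x y t
  = pd i K x y t - pd i pt x y t * / rho x y t.
Proof.
  intros [_ [Ev1 _]] [_ [Ev2 _]] [_ [Er _]] [_ [Eu _]] [_ [EK _]] [_ [Ept _]] Hx Hdiv Hadv Hr.
  assert (A1 : dt (fun a b c => rho a b c * u a b c) x y t
               = dt rho x y t * u x y t + rho x y t * dt u x y t)
    by (apply (pd_mult 2); auto).
  assert (A2 : dx (fun a b s => v1 a b s * (rho a b s * u a b s)) x y t
               = dx v1 x y t * (rho x y t * u x y t)
                 + v1 x y t * (dx rho x y t * u x y t + rho x y t * dx u x y t)).
  { transitivity (dx v1 x y t * (rho x y t * u x y t)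
                  + v1 x y t * dx (fun a b s => rho a b s * u a b s) x y t).
    - apply (pd_mult 0 v1 (fun a b s => rho a b s * u a b s)); auto.
      apply ex_pd_mult; auto.
    - assert (B : dx (fun a b s => rho a b s * u a b s) x y t
                  = dx rho x y t * u x y t + rho x y t * dx u x y t)
        by (apply (pd_mult 0); auto).
      rewrite B. reflexivity. }
  assert (A3 : dy (fun a b s => v2 a b s * (rho a b s * u a b s)) x y t
               = dy v2 x y t * (rho x y t * u x y t)
                 + v2 x y t * (dy rho x y t * u x y t + rho x y t * dy u x y t)).
  { transitivity (dy v2 x y t * (rho x y t * u x y t)
                  + v2 x y t * dy (fun a b s => rho a b s * u a b s) x y t).
    - apply (pd_mult 1 v2 (fun a b s => rho a b s * u a b s)); auto.
      apply ex_pd_mult; auto.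
    - assert (B : dy (fun a b s => rho a b s * u a b s) x y t
                  = dy rho x y t * u x y t + rho x y t * dy u x y t)
        by (apply (pd_mult 1); auto).
      rewrite B. reflexivity. }
  assert (A4 : pd i (fun a b c => rho a b c * K a b c - pt a b c) x y t
               = pd i rho x y t * K x y t + rho x y t * pd i K x y t - pd i pt x y t).
  { transitivity (pd i (fun a b c => rho a b c * K a b c) x y t - pd i pt x y t).
    - apply (pd_minus i (fun a b c => rho a b c * K a b c) pt); auto.
      apply ex_pd_mult; auto.
    - rewrite (pd_mult i rho K); auto. }
  rewrite A1, A2, A3, A4 in Hx.
  assert (Hdt : dt rho x y t = - (v1 x y t * dx rho x y t) - v2 x y t * dy rho x y t) by lra.
  assert (Hdy : dy v2 x y t = - dx v1 x y t) by lra.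
  rewrite Hdt, Hdy in Hx.
  apply Rmult_eq_reg_l with (rho x y t); [|exact Hr].
  replace (rho x y t * (pd i K x y t - pd i pt x y t * / rho x y t))
    with (rho x y t * pd i K x y t - pd i pt x y t) by (field; exact Hr).
  nra.
Qed.

Lemma smooth_cont3 l f : smooth3 f -> cont3 (iter_pd l f).
Proof. intros H x y t. exact (proj2 (H l x y t)). Qed.

Lemma schwarz_x phi : smooth3 phi -> forall X Y t, dt (dx phi) X Y t = dx (dt phi) X Y t.
Proof.
  intros H X Y t.
  symmetry.
  apply (Schwarz (fun u v => phi u Y v) X t).
  - exists (mkposreal 1 Rlt_0_1). intros u v _ _. repeat split.
    + exact (proj1 (H nil u Y v) 0%nat).
    + exact (proj1 (H nil u Y v) 2%nat).
    + exact (proj1 (H (2%nat :: nil) u Y v) 0%nat).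
    + exact (proj1 (H (0%nat :: nil) u Y v) 2%nat).
  - apply continuity_2d_pt_filterlim.
    exact (cont3_comp (iter_pd (0%nat :: 2%nat :: nil) phi) fst (fun _ => Y) snd (X, t)
             (smooth_cont3 _ _ H) (cfst _) (cconst _ _) (csnd _)).
  - apply continuity_2d_pt_filterlim.
    exact (cont3_comp (iter_pd (2%nat :: 0%nat :: nil) phi) fst (fun _ => Y) snd (X, t)
             (smooth_cont3 _ _ H) (cfst _) (cconst _ _) (csnd _)).
Qed.

Lemma schwarz_y phi : smooth3 phi -> forall X Y t, dt (dy phi) X Y t = dy (dt phi) X Y t.
Proof.
  intros H X Y t.
  symmetry.
  apply (Schwarz (fun u v => phi X u v) Y t).
  - exists (mkposreal 1 Rlt_0_1). intros u v _ _. repeat split.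
    + exact (proj1 (H nil X u v) 1%nat).
    + exact (proj1 (H nil X u v) 2%nat).
    + exact (proj1 (H (2%nat :: nil) X u v) 1%nat).
    + exact (proj1 (H (1%nat :: nil) X u v) 2%nat).
  - apply continuity_2d_pt_filterlim.
    exact (cont3_comp (iter_pd (1%nat :: 2%nat :: nil) phi) (fun _ => X) fst snd (Y, t)
             (smooth_cont3 _ _ H) (cconst _ _) (cfst _) (csnd _)).
  - apply continuity_2d_pt_filterlim.
    exact (cont3_comp (iter_pd (2%nat :: 1%nat :: nil) phi) (fun _ => X) fst snd (Y, t)
             (smooth_cont3 _ _ H) (cconst _ _) (cfst _) (csnd _)).
Qed.

Lemma isd_plus (f g : R -> R) t df dg : is_derive f t df -> is_derive g t dg ->
  is_derive (fun u => f u + g u) t (df + dg).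
Proof. intros. exact (is_derive_plus f g t df dg H H0). Qed.
Lemma isd_mult (f g : R -> R) t df dg : is_derive f t df -> is_derive g t dg ->
  is_derive (fun u => f u * g u) t (df * g t + f t * dg).
Proof. intros. apply (is_derive_mult f g t df dg H H0). intros; apply Rmult_comm. Qed.
Lemma isd_const (c t : R) : is_derive (fun _ => c) t 0.
Proof. exact (is_derive_const c t). Qed.
Lemma isd_id (t : R) : is_derive (fun u => u) t 1.
Proof. exact (is_derive_id t). Qed.

Lemma pd_correct0 f x y t : ex_pd 0 f x y t -> is_derive (fun a => f a y t) x (dx f x y t).
Proof. intros H. apply Derive_correct. exact H. Qed.
Lemma pd_correct1 f x y t : ex_pd 1 f x y t -> is_derive (fun a => f x a t) y (dy f x y t).
Proof. intros H. apply Derive_correct. exact H. Qed.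
Lemma pd_correct2 f x y t : ex_pd 2 f x y t -> is_derive (fun a => f x y a) t (dt f x y t).
Proof. intros H. apply Derive_correct. exact H. Qed.

Lemma C1_chain3 (f : field) (a b c : R -> R) (r0 a' b' c' : R) : C1 f ->
  is_derive a r0 a' -> is_derive b r0 b' -> is_derive c r0 c' ->
  is_derive (fun r => f (a r) (b r) (c r)) r0
    (dx f (a r0) (b r0) (c r0) * a' + dy f (a r0) (b r0) (c r0) * b'
     + dt f (a r0) (b r0) (c r0) * c').
Proof.
  intros [_ [E P]]. apply chain3; auto. exact (P 0%nat). exact (P 1%nat). exact (P 2%nat).
Qed.

Lemma smooth1_derive (c : R -> R) s : smooth1 c -> is_derive c s (Derive c s).
Proof. intros H. apply Derive_correct. exact (H 1%nat s). Qed.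
Lemma smooth1_cont (c : R -> R) s : smooth1 c -> continuous c s.
Proof. intros H. apply (ex_derive_continuous c). exact (H 1%nat s). Qed.
Lemma smooth1_dcont (c : R -> R) s : smooth1 c -> continuous (Derive c) s.
Proof. intros H. apply (ex_derive_continuous (Derive c)). exact (H 2%nat s). Qed.

Definition Sf (phi : field) (c01 c02 : R -> R) (t s : R) : R :=
  dx phi (c01 s) (c02 s) t * Derive c01 s + dy phi (c01 s) (c02 s) t * Derive c02 s.

Lemma dS (phi : field) c01 c02 t s : C1 phi -> smooth1 c01 -> smooth1 c02 ->
  is_derive (fun r => phi (c01 r) (c02 r) t) s (Sf phi c01 c02 t s).
Proof.
  intros Hp H1 H2. eapply is_derive_eq.
  - apply (C1_chain3 phi c01 c02 (fun _ => t)); auto.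
    + apply smooth1_derive; auto.
    + apply smooth1_derive; auto.
    + apply isd_const.
  - unfold Sf. ring.
Qed.

Lemma cont_XY (g phi1 phi2 : field) (c01 c02 : R -> R) (z : R * R) :
  cont3 g -> cont3 phi1 -> cont3 phi2 -> smooth1 c01 -> smooth1 c02 ->
  continuous (fun z : R * R => g (phi1 (c01 (snd z)) (c02 (snd z)) (fst z))
                              (phi2 (c01 (snd z)) (c02 (snd z)) (fst z)) (fst z)) z.
Proof.
  intros Hg H1 H2 K1 K2.
  assert (Ca : continuous (fun z : R * R => c01 (snd z)) z).
  { apply (continuous_comp snd c01). apply csnd. apply smooth1_cont; auto. }
  assert (Cb : continuous (fun z : R * R => c02 (snd z)) z).
  { apply (continuous_comp snd c02). apply csnd. apply smooth1_cont; auto. }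
  apply (cont3_comp g); auto.
  - apply (cont3_comp phi1); auto. apply cfst.
  - apply (cont3_comp phi2); auto. apply cfst.
  - apply cfst.
Qed.

Lemma cont_S (phi : field) (c01 c02 : R -> R) (z : R * R) :
  cont3 (dx phi) -> cont3 (dy phi) -> smooth1 c01 -> smooth1 c02 ->
  continuous (fun z : R * R => Sf phi c01 c02 (fst z) (snd z)) z.
Proof.
  intros H1 H2 K1 K2. unfold Sf.
  assert (Ca : continuous (fun z : R * R => c01 (snd z)) z).
  { apply (continuous_comp snd c01). apply csnd. apply smooth1_cont; auto. }
  assert (Cb : continuous (fun z : R * R => c02 (snd z)) z).
  { apply (continuous_comp snd c02). apply csnd. apply smooth1_cont; auto. }
  assert (Da : continuous (fun z : R * R => Derive c01 (snd z)) z).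
  { apply (continuous_comp snd (Derive c01)). apply csnd. apply smooth1_dcont; auto. }
  assert (Db : continuous (fun z : R * R => Derive c02 (snd z)) z).
  { apply (continuous_comp snd (Derive c02)). apply csnd. apply smooth1_dcont; auto. }
  apply cplus; apply cmult; auto.
  - apply (cont3_comp (dx phi)); auto. apply cfst.
  - apply (cont3_comp (dy phi)); auto. apply cfst.
Qed.

Lemma cont_slice (H : R -> R -> R) (t s : R) :
  (forall z : R * R, continuous (fun z : R * R => H (fst z) (snd z)) z) ->
  continuous (fun s => H t s) s.
Proof.
  intros Hc.
  apply (continuous_comp (fun s : R => (t, s)) (fun z : R * R => H (fst z) (snd z))).
  - apply cpair; [apply cconst|apply continuous_id].
  - apply Hc.
Qed.

Ltac rring := cbv beta; match goal with |- ?a = ?b => change (@eq R a b) end; ring.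

Definition u1f (sigma2 : R) (v1 v2 zeta : field) : field :=
  fun x y t => v1 x y t + sigma2 * (w_of v1 v2 zeta x y t * dx zeta x y t).
Definition u2f (sigma2 : R) (v1 v2 zeta : field) : field :=
  fun x y t => v2 x y t + sigma2 * (w_of v1 v2 zeta x y t * dy zeta x y t).
Definition Kf (sigma2 : R) (v1 v2 zeta : field) : field :=
  fun x y t => / 2 * (v1 x y t * v1 x y t + v2 x y t * v2 x y t
                      + sigma2 * (w_of v1 v2 zeta x y t * w_of v1 v2 zeta x y t)).
Definition ptf (rhoref Fr2 : R) (p zeta : field) : field :=
  fun x y t => p x y t + rhoref / (2 * Fr2) * (zeta x y t * zeta x y t).
Definition Af1 (sigma2 rhoref Fr2 : R) (v1 v2 zeta rho p : field) : field :=
  fun x y t => dx (Kf sigma2 v1 v2 zeta) x y t - dx (ptf rhoref Fr2 p zeta) x y t * / rho x y t.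
Definition Af2 (sigma2 rhoref Fr2 : R) (v1 v2 zeta rho p : field) : field :=
  fun x y t => dy (Kf sigma2 v1 v2 zeta) x y t - dy (ptf rhoref Fr2 p zeta) x y t * / rho x y t.

Definition Fn (sigma2 : R) (v1 v2 zeta phi1 phi2 : field) (c01 c02 : R -> R) (t s : R) : R :=
  u1f sigma2 v1 v2 zeta (phi1 (c01 s) (c02 s) t) (phi2 (c01 s) (c02 s) t) t * Sf phi1 c01 c02 t s
  + u2f sigma2 v1 v2 zeta (phi1 (c01 s) (c02 s) t) (phi2 (c01 s) (c02 s) t) t * Sf phi2 c01 c02 t s.
Definition Gn (sigma2 rhoref Fr2 : R) (v1 v2 zeta rho p phi1 phi2 : field) (c01 c02 : R -> R)
  (t s : R) : R :=
  Sf phi1 c01 c02 t s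
    * Af1 sigma2 rhoref Fr2 v1 v2 zeta rho p (phi1 (c01 s) (c02 s) t) (phi2 (c01 s) (c02 s) t) t
  + Sf phi2 c01 c02 t s
    * Af2 sigma2 rhoref Fr2 v1 v2 zeta rho p (phi1 (c01 s) (c02 s) t) (phi2 (c01 s) (c02 s) t) t.

Lemma chain_loop (g phi1 phi2 : field) c01 c02 t s : C1 g -> C1 phi1 -> C1 phi2 ->
  smooth1 c01 -> smooth1 c02 ->
  is_derive (fun r => g (phi1 (c01 r) (c02 r) t) (phi2 (c01 r) (c02 r) t) t) s
    (dx g (phi1 (c01 s) (c02 s) t) (phi2 (c01 s) (c02 s) t) t * Sf phi1 c01 c02 t s
     + dy g (phi1 (c01 s) (c02 s) t) (phi2 (c01 s) (c02 s) t) t * Sf phi2 c01 c02 t s).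
Proof.
  intros Cg C1p C2p K1 K2. eapply is_derive_eq.
  - apply (C1_chain3 g (fun r => phi1 (c01 r) (c02 r) t) (fun r => phi2 (c01 r) (c02 r) t)
             (fun _ => t)); auto.
    + apply dS; auto.
    + apply dS; auto.
    + apply isd_const.
  - ring.
Qed.

Lemma chain_time (g phi1 phi2 v1 v2 : field) X0 Y0 t : C1 g -> is_flow v1 v2 phi1 phi2 ->
  is_derive (fun u => g (phi1 X0 Y0 u) (phi2 X0 Y0 u) u) t
    (dx g (phi1 X0 Y0 t) (phi2 X0 Y0 t) t * v1 (phi1 X0 Y0 t) (phi2 X0 Y0 t) t
     + dy g (phi1 X0 Y0 t) (phi2 X0 Y0 t) t * v2 (phi1 X0 Y0 t) (phi2 X0 Y0 t) t
     + dt g (phi1 X0 Y0 t) (phi2 X0 Y0 t) t).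
Proof.
  intros Cg Hf. eapply is_derive_eq.
  - apply (C1_chain3 g (fun u => phi1 X0 Y0 u) (fun u => phi2 X0 Y0 u) (fun u => u)); auto.
    + exact (proj1 (proj2 (proj2 (Hf X0 Y0 t)))).
    + exact (proj2 (proj2 (proj2 (Hf X0 Y0 t)))).
    + apply isd_id.
  - ring.
Qed.

Theorem mainTheorem1
  (sigma2 Fr2 rhoref : R) (v1 v2 zeta rho D p phi1 phi2 : field) (c01 c02 : R -> R)
  (Hsigma : 0 < sigma2) (HFr : 0 < Fr2)
  (Hv1 : smooth3 v1) (Hv2 : smooth3 v2) (Hzeta : smooth3 zeta) (Hrho : smooth3 rho)
  (HD : smooth3 D) (Hp : smooth3 p) (Hphi1 : smooth3 phi1) (Hphi2 : smooth3 phi2)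
  (Hrho_pos : forall x y t, 0 < rho x y t)
  (HEP : EP_equations sigma2 rhoref Fr2 v1 v2 zeta rho D p)
  (Hflow : is_flow v1 v2 phi1 phi2)
  (Hc01 : smooth1 c01) (Hc02 : smooth1 c02)
  (Hclosed : c01 0 = c01 1 /\ c02 0 = c02 1) :
  forall t : R,
    is_derive (circulation sigma2 v1 v2 zeta phi1 phi2 c01 c02) t
      (- loop_int_inv_rho_d rho (ptilde rhoref Fr2 p zeta) phi1 phi2 c01 c02 t).
Proof.
  intros t0.
  unfold EP_equations in HEP. cbv zeta in HEP.
  pose proof (smooth_C1 _ Hv1) as Cv1. pose proof (smooth_C1 _ Hv2) as Cv2.
  pose proof (smooth_C1 _ Hzeta) as Cz. pose proof (smooth_C1 _ Hrho) as Cr.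
  pose proof (smooth_C1 _ Hp) as Cp.
  pose proof (smooth_C1 _ Hphi1) as Cphi1. pose proof (smooth_C1 _ Hphi2) as Cphi2.
  assert (Czx : C1 (dx zeta)) by exact (smooth_C1 _ (smooth_pd 0 _ Hzeta)).
  assert (Czy : C1 (dy zeta)) by exact (smooth_C1 _ (smooth_pd 1 _ Hzeta)).
  assert (Czt : C1 (dt zeta)) by exact (smooth_C1 _ (smooth_pd 2 _ Hzeta)).
  assert (C1x : C1 (dx phi1)) by exact (smooth_C1 _ (smooth_pd 0 _ Hphi1)).
  assert (C1y : C1 (dy phi1)) by exact (smooth_C1 _ (smooth_pd 1 _ Hphi1)).
  assert (C2x : C1 (dx phi2)) by exact (smooth_C1 _ (smooth_pd 0 _ Hphi2)).
  assert (C2y : C1 (dy phi2)) by exact (smooth_C1 _ (smooth_pd 1 _ Hphi2)).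
  assert (Cw : C1 (w_of v1 v2 zeta)) by (unfold w_of; exact (C1_plus _ _ (C1_plus _ _ Czt (C1_mult _ _ Cv1 Czx)) (C1_mult _ _ Cv2 Czy))).
  assert (Cu1 : C1 (u1f sigma2 v1 v2 zeta)) by (unfold u1f; exact (C1_plus _ _ Cv1 (C1_mult _ _ (C1_const sigma2) (C1_mult _ _ Cw Czx)))).
  assert (Cu2 : C1 (u2f sigma2 v1 v2 zeta)) by (unfold u2f; exact (C1_plus _ _ Cv2 (C1_mult _ _ (C1_const sigma2) (C1_mult _ _ Cw Czy)))).
  assert (CK : C1 (Kf sigma2 v1 v2 zeta)) by (unfold Kf; exact (C1_mult _ _ (C1_const (/2)) (C1_plus _ _ (C1_plus _ _ (C1_mult _ _ Cv1 Cv1) (C1_mult _ _ Cv2 Cv2)) (C1_mult _ _ (C1_const sigma2) (C1_mult _ _ Cw Cw))))).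
  assert (Cpt : C1 (ptf rhoref Fr2 p zeta)) by (unfold ptf; exact (C1_plus _ _ Cp (C1_mult _ _ (C1_const (rhoref / (2 * Fr2))) (C1_mult _ _ Cz Cz)))).
  assert (Hr : forall x y t, rho x y t <> 0) by (intros x y t; specialize (Hrho_pos x y t); lra).
  assert (ED : D = fun _ _ _ => 1).
  { fext. exact (proj2 (proj2 (proj2 (proj2 (proj2 (HEP _ _ _)))))). }
  assert (Em1 : m1 sigma2 v1 v2 zeta rho D = fun x y t => rho x y t * u1f sigma2 v1 v2 zeta x y t).
  { rewrite ED. unfold m1, u1f. fext. ring. }
  assert (Em2 : m2 sigma2 v1 v2 zeta rho D = fun x y t => rho x y t * u2f sigma2 v1 v2 zeta x y t).
  { rewrite ED. unfold m2, u2f. fext. ring. }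
  assert (ElD : dl_dD sigma2 rhoref Fr2 v1 v2 zeta rho p
                = fun x y t => rho x y t * Kf sigma2 v1 v2 zeta x y t - ptf rhoref Fr2 p zeta x y t).
  { unfold dl_dD, Kf, ptf. fext. unfold Rdiv. ring. }
  assert (Elr : dl_drho sigma2 v1 v2 zeta D = Kf sigma2 v1 v2 zeta).
  { rewrite ED. unfold dl_drho, Kf. fext. ring. }
  assert (Hdiv : forall x y t, dx v1 x y t + dy v2 x y t = 0).
  { intros x y t. destruct (HEP x y t) as [_ [_ [_ [HDa _]]]].
    rewrite ED in HDa. cbv beta in HDa.
    assert (e1 : (fun a b s : R => 1 * v1 a b s) = v1) by (fext; ring).
    assert (e2 : (fun a b s : R => 1 * v2 a b s) = v2) by (fext; ring).
    rewrite e1, e2 in HDa.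
    assert (e0 : dt (fun _ _ _ : R => 1) x y t = 0) by (unfold dt; apply Derive_const).
    lra. }
  assert (E1 : forall x y t,
    dt (u1f sigma2 v1 v2 zeta) x y t + v1 x y t * dx (u1f sigma2 v1 v2 zeta) x y t
    + v2 x y t * dy (u1f sigma2 v1 v2 zeta) x y t
    + u1f sigma2 v1 v2 zeta x y t * dx v1 x y t + u2f sigma2 v1 v2 zeta x y t * dx v2 x y t
    = Af1 sigma2 rhoref Fr2 v1 v2 zeta rho p x y t).
  { intros x y t. destruct (HEP x y t) as [H1 [_ [_ [_ [Hra _]]]]].
    rewrite Em1, Em2, ElD, Elr in H1. rewrite ED in H1. cbv beta in H1.
    exact (momentum_gen 0 v1 v2 rho (u1f sigma2 v1 v2 zeta) (u1f sigma2 v1 v2 zeta)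
             (u2f sigma2 v1 v2 zeta) (Kf sigma2 v1 v2 zeta) (ptf rhoref Fr2 p zeta) x y t
             Cv1 Cv2 Cr Cu1 CK Cpt H1 (Hdiv x y t) Hra (Hr x y t)). }
  assert (E2 : forall x y t,
    dt (u2f sigma2 v1 v2 zeta) x y t + v1 x y t * dx (u2f sigma2 v1 v2 zeta) x y t
    + v2 x y t * dy (u2f sigma2 v1 v2 zeta) x y t
    + u1f sigma2 v1 v2 zeta x y t * dy v1 x y t + u2f sigma2 v1 v2 zeta x y t * dy v2 x y t
    = Af2 sigma2 rhoref Fr2 v1 v2 zeta rho p x y t).
  { intros x y t. destruct (HEP x y t) as [_ [H2 [_ [_ [Hra _]]]]].
    rewrite Em1, Em2, ElD, Elr in H2. rewrite ED in H2. cbv beta in H2.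
    exact (momentum_gen 1 v1 v2 rho (u2f sigma2 v1 v2 zeta) (u1f sigma2 v1 v2 zeta)
             (u2f sigma2 v1 v2 zeta) (Kf sigma2 v1 v2 zeta) (ptf rhoref Fr2 p zeta) x y t
             Cv1 Cv2 Cr Cu2 CK Cpt H2 (Hdiv x y t) Hra (Hr x y t)). }
  assert (Hdt1 : dt phi1 = fun X Y t => v1 (phi1 X Y t) (phi2 X Y t) t).
  { fext. unfold dt. apply is_derive_unique. apply Hflow. }
  assert (Hdt2 : dt phi2 = fun X Y t => v2 (phi1 X Y t) (phi2 X Y t) t).
  { fext. unfold dt. apply is_derive_unique. apply Hflow. }
  assert (MX : forall V : field, C1 V -> forall X Y t,
    dx (fun X Y t => V (phi1 X Y t) (phi2 X Y t) t) X Y t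
    = dx V (phi1 X Y t) (phi2 X Y t) t * dx phi1 X Y t
      + dy V (phi1 X Y t) (phi2 X Y t) t * dx phi2 X Y t).
  { intros V CV X Y t.
    match goal with |- _ = ?r => change (Derive (fun a => V (phi1 a Y t) (phi2 a Y t) t) X = r) end.
    apply is_derive_unique. eapply is_derive_eq.
    - apply (C1_chain3 V (fun a => phi1 a Y t) (fun a => phi2 a Y t) (fun _ => t)); auto.
      + apply pd_correct0. apply (proj1 (proj2 Cphi1)).
      + apply pd_correct0. apply (proj1 (proj2 Cphi2)).
      + apply isd_const.
    - ring. }
  assert (MY : forall V : field, C1 V -> forall X Y t,
    dy (fun X Y t => V (phi1 X Y t) (phi2 X Y t) t) X Y t
    = dx V (phi1 X Y t) (phi2 X Y t) t * dy phi1 X Y t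
      + dy V (phi1 X Y t) (phi2 X Y t) t * dy phi2 X Y t).
  { intros V CV X Y t.
    match goal with |- _ = ?r => change (Derive (fun a => V (phi1 X a t) (phi2 X a t) t) Y = r) end.
    apply is_derive_unique. eapply is_derive_eq.
    - apply (C1_chain3 V (fun a => phi1 X a t) (fun a => phi2 X a t) (fun _ => t)); auto.
      + apply pd_correct1. apply (proj1 (proj2 Cphi1)).
      + apply pd_correct1. apply (proj1 (proj2 Cphi2)).
      + apply isd_const.
    - ring. }
  assert (M1x : forall X Y t, dt (dx phi1) X Y t
     = dx v1 (phi1 X Y t) (phi2 X Y t) t * dx phi1 X Y t
       + dy v1 (phi1 X Y t) (phi2 X Y t) t * dx phi2 X Y t).
  { intros. rewrite schwarz_x by exact Hphi1. rewrite Hdt1. apply MX; auto. }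
  assert (M1y : forall X Y t, dt (dy phi1) X Y t
     = dx v1 (phi1 X Y t) (phi2 X Y t) t * dy phi1 X Y t
       + dy v1 (phi1 X Y t) (phi2 X Y t) t * dy phi2 X Y t).
  { intros. rewrite schwarz_y by exact Hphi1. rewrite Hdt1. apply MY; auto. }
  assert (M2x : forall X Y t, dt (dx phi2) X Y t
     = dx v2 (phi1 X Y t) (phi2 X Y t) t * dx phi1 X Y t
       + dy v2 (phi1 X Y t) (phi2 X Y t) t * dx phi2 X Y t).
  { intros. rewrite schwarz_x by exact Hphi2. rewrite Hdt2. apply MX; auto. }
  assert (M2y : forall X Y t, dt (dy phi2) X Y t
     = dx v2 (phi1 X Y t) (phi2 X Y t) t * dy phi1 X Y t
       + dy v2 (phi1 X Y t) (phi2 X Y t) t * dy phi2 X Y t).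
  { intros. rewrite schwarz_y by exact Hphi2. rewrite Hdt2. apply MY; auto. }
  assert (Ecirc : circulation sigma2 v1 v2 zeta phi1 phi2 c01 c02
                  = fun t => RInt (fun s => Fn sigma2 v1 v2 zeta phi1 phi2 c01 c02 t s) 0 1).
  { apply functional_extensionality. intros t.
    unfold circulation, loop1, loop2. apply RInt_ext. intros s _.
    cbv zeta.
    replace (Derive (fun r => phi1 (c01 r) (c02 r) t) s) with (Sf phi1 c01 c02 t s)
      by (symmetry; apply is_derive_unique; apply dS; auto).
    replace (Derive (fun r => phi2 (c01 r) (c02 r) t) s) with (Sf phi2 c01 c02 t s)
      by (symmetry; apply is_derive_unique; apply dS; auto).
    replace (Derive (fun r => zeta (phi1 (c01 r) (c02 r) t) (phi2 (c01 r) (c02 r) t) t) s)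
      with (dx zeta (phi1 (c01 s) (c02 s) t) (phi2 (c01 s) (c02 s) t) t * Sf phi1 c01 c02 t s
            + dy zeta (phi1 (c01 s) (c02 s) t) (phi2 (c01 s) (c02 s) t) t * Sf phi2 c01 c02 t s)
      by (symmetry; apply is_derive_unique; apply chain_loop; auto).
    match goal with |- ?a = ?b => change (@eq R a b) end.
    unfold Fn, u1f, u2f. ring. }
  assert (DF : forall t s, is_derive (fun u => Fn sigma2 v1 v2 zeta phi1 phi2 c01 c02 u s) t
                   (Gn sigma2 rhoref Fr2 v1 v2 zeta rho p phi1 phi2 c01 c02 t s)).
  { intros t s.
    assert (DS1 : is_derive (fun u => Sf phi1 c01 c02 u s) t
       (dt (dx phi1) (c01 s) (c02 s) t * Derive c01 s + dt (dy phi1) (c01 s) (c02 s) t * Derive c02 s)).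
    { unfold Sf. eapply is_derive_eq.
      - apply isd_plus; apply isd_mult.
        + exact (pd_correct2 (dx phi1) (c01 s) (c02 s) t (proj1 (proj2 C1x) 2%nat (c01 s) (c02 s) t)).
        + exact (isd_const (Derive c01 s) t).
        + exact (pd_correct2 (dy phi1) (c01 s) (c02 s) t (proj1 (proj2 C1y) 2%nat (c01 s) (c02 s) t)).
        + exact (isd_const (Derive c02 s) t).
      - rring. }
    assert (DS2 : is_derive (fun u => Sf phi2 c01 c02 u s) t
       (dt (dx phi2) (c01 s) (c02 s) t * Derive c01 s + dt (dy phi2) (c01 s) (c02 s) t * Derive c02 s)).
    { unfold Sf. eapply is_derive_eq.
      - apply isd_plus; apply isd_mult.
        + exact (pd_correct2 (dx phi2) (c01 s) (c02 s) t (proj1 (proj2 C2x) 2%nat (c01 s) (c02 s) t)).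
        + exact (isd_const (Derive c01 s) t).
        + exact (pd_correct2 (dy phi2) (c01 s) (c02 s) t (proj1 (proj2 C2y) 2%nat (c01 s) (c02 s) t)).
        + exact (isd_const (Derive c02 s) t).
      - rring. }
    unfold Fn. eapply is_derive_eq.
    - apply isd_plus; apply isd_mult.
      + apply (chain_time (u1f sigma2 v1 v2 zeta) phi1 phi2 v1 v2 (c01 s) (c02 s) t Cu1 Hflow).
      + exact DS1.
      + apply (chain_time (u2f sigma2 v1 v2 zeta) phi1 phi2 v1 v2 (c01 s) (c02 s) t Cu2 Hflow).
      + exact DS2.
    - rewrite M1x, M1y, M2x, M2y.
      pose proof (E1 (phi1 (c01 s) (c02 s) t) (phi2 (c01 s) (c02 s) t) t) as e1.
      pose proof (E2 (phi1 (c01 s) (c02 s) t) (phi2 (c01 s) (c02 s) t) t) as e2.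
      unfold Gn, Sf.
      set (x := phi1 (c01 s) (c02 s) t) in *.
      set (y := phi2 (c01 s) (c02 s) t) in *.
      set (A1 := Af1 sigma2 rhoref Fr2 v1 v2 zeta rho p x y t) in *.
      set (A2 := Af2 sigma2 rhoref Fr2 v1 v2 zeta rho p x y t) in *.
      assert (r1 : dt (u1f sigma2 v1 v2 zeta) x y t = A1 - (v1 x y t * dx (u1f sigma2 v1 v2 zeta) x y t
         + v2 x y t * dy (u1f sigma2 v1 v2 zeta) x y t
         + u1f sigma2 v1 v2 zeta x y t * dx v1 x y t + u2f sigma2 v1 v2 zeta x y t * dx v2 x y t)) by lra.
      assert (r2 : dt (u2f sigma2 v1 v2 zeta) x y t = A2 - (v1 x y t * dx (u2f sigma2 v1 v2 zeta) x y t
         + v2 x y t * dy (u2f sigma2 v1 v2 zeta) x y t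
         + u1f sigma2 v1 v2 zeta x y t * dy v1 x y t + u2f sigma2 v1 v2 zeta x y t * dy v2 x y t)) by lra.
      rewrite r1, r2. ring. }
  assert (CA1 : cont3 (Af1 sigma2 rhoref Fr2 v1 v2 zeta rho p)).
  { unfold Af1. apply cont3_minus.
    - exact (proj2 (proj2 CK) 0%nat).
    - apply cont3_mult; [exact (proj2 (proj2 Cpt) 0%nat)|].
      apply cont3_inv; [exact (proj1 Cr) | exact Hr]. }
  assert (CA2 : cont3 (Af2 sigma2 rhoref Fr2 v1 v2 zeta rho p)).
  { unfold Af2. apply cont3_minus.
    - exact (proj2 (proj2 CK) 1%nat).
    - apply cont3_mult; [exact (proj2 (proj2 Cpt) 1%nat)|].
      apply cont3_inv; [exact (proj1 Cr) | exact Hr]. }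
  assert (CS1 : forall z : R * R, continuous (fun z : R * R => Sf phi1 c01 c02 (fst z) (snd z)) z).
  { intros z. exact (cont_S phi1 c01 c02 z (proj1 C1x) (proj1 C1y) Hc01 Hc02). }
  assert (CS2 : forall z : R * R, continuous (fun z : R * R => Sf phi2 c01 c02 (fst z) (snd z)) z).
  { intros z. exact (cont_S phi2 c01 c02 z (proj1 C2x) (proj1 C2y) Hc01 Hc02). }
  assert (CXY : forall g : field, cont3 g -> forall z : R * R,
     continuous (fun z : R * R => g (phi1 (c01 (snd z)) (c02 (snd z)) (fst z))
                                  (phi2 (c01 (snd z)) (c02 (snd z)) (fst z)) (fst z)) z).
  { intros g Cg z. exact (cont_XY g phi1 phi2 c01 c02 z Cg (proj1 Cphi1) (proj1 Cphi2) Hc01 Hc02). }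
  assert (CG : forall z : R * R, continuous (fun z : R * R =>
     Gn sigma2 rhoref Fr2 v1 v2 zeta rho p phi1 phi2 c01 c02 (fst z) (snd z)) z).
  { intros z. unfold Gn. apply cplus; apply cmult.
    - apply CS1.
    - apply (CXY (Af1 sigma2 rhoref Fr2 v1 v2 zeta rho p) CA1).
    - apply CS2.
    - apply (CXY (Af2 sigma2 rhoref Fr2 v1 v2 zeta rho p) CA2). }
  assert (CF : forall z : R * R, continuous (fun z : R * R =>
     Fn sigma2 v1 v2 zeta phi1 phi2 c01 c02 (fst z) (snd z)) z).
  { intros z. unfold Fn. apply cplus; apply cmult.
    - apply (CXY (u1f sigma2 v1 v2 zeta) (proj1 Cu1)).
    - apply CS1.
    - apply (CXY (u2f sigma2 v1 v2 zeta) (proj1 Cu2)).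
    - apply CS2. }
  assert (EDG : forall t s, Derive (fun u => Fn sigma2 v1 v2 zeta phi1 phi2 c01 c02 u s) t
                            = Gn sigma2 rhoref Fr2 v1 v2 zeta rho p phi1 phi2 c01 c02 t s).
  { intros t s. apply is_derive_unique. apply DF. }
  rewrite Ecirc.
  eapply is_derive_eq.
  - apply (is_derive_RInt_param (fun t s => Fn sigma2 v1 v2 zeta phi1 phi2 c01 c02 t s) 0 1 t0).
    + exists (mkposreal 1 Rlt_0_1). intros y _ s _.
      exists (Gn sigma2 rhoref Fr2 v1 v2 zeta rho p phi1 phi2 c01 c02 y s). apply DF.
    + intros s _.
      apply (continuity_2d_pt_ext (fun u v => Gn sigma2 rhoref Fr2 v1 v2 zeta rho p phi1 phi2 c01 c02 u v)).
      * intros u v. symmetry. apply EDG.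
      * apply continuity_2d_pt_filterlim. pose proof (CG (t0, s)) as HG. cbn [fst snd] in HG. exact HG.
    + exists (mkposreal 1 Rlt_0_1). intros y _. apply (@ex_RInt_continuous R_CompleteNormedModule). intros s _.
      apply (cont_slice (Fn sigma2 v1 v2 zeta phi1 phi2 c01 c02) y s). apply CF.
  - assert (Ept : ptilde rhoref Fr2 p zeta = ptf rhoref Fr2 p zeta).
    { unfold ptilde, ptf. fext. unfold Rdiv. ring. }
    unfold loop_int_inv_rho_d, loop1, loop2. rewrite Ept.
    pose (kk := fun r => Kf sigma2 v1 v2 zeta (phi1 (c01 r) (c02 r) t0) (phi2 (c01 r) (c02 r) t0) t0).
    pose (DK := fun t r =>
      dx (Kf sigma2 v1 v2 zeta) (phi1 (c01 r) (c02 r) t) (phi2 (c01 r) (c02 r) t) t * Sf phi1 c01 c02 t r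
      + dy (Kf sigma2 v1 v2 zeta) (phi1 (c01 r) (c02 r) t) (phi2 (c01 r) (c02 r) t) t * Sf phi2 c01 c02 t r).
    pose (QQ := fun t r => / rho (phi1 (c01 r) (c02 r) t) (phi2 (c01 r) (c02 r) t) t *
      (dx (ptf rhoref Fr2 p zeta) (phi1 (c01 r) (c02 r) t) (phi2 (c01 r) (c02 r) t) t * Sf phi1 c01 c02 t r
      + dy (ptf rhoref Fr2 p zeta) (phi1 (c01 r) (c02 r) t) (phi2 (c01 r) (c02 r) t) t * Sf phi2 c01 c02 t r)).
    assert (HK : forall r, is_derive kk r (DK t0 r)).
    { intros r. exact (chain_loop (Kf sigma2 v1 v2 zeta) phi1 phi2 c01 c02 t0 r CK Cphi1 Cphi2 Hc01 Hc02). }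
    assert (HQ : forall s,
      / rho (phi1 (c01 s) (c02 s) t0) (phi2 (c01 s) (c02 s) t0) t0
      * Derive (fun r => ptf rhoref Fr2 p zeta (phi1 (c01 r) (c02 r) t0) (phi2 (c01 r) (c02 r) t0) t0) s
      = QQ t0 s).
    { intros s. unfold QQ. f_equal. apply is_derive_unique.
      exact (chain_loop (ptf rhoref Fr2 p zeta) phi1 phi2 c01 c02 t0 s Cpt Cphi1 Cphi2 Hc01 Hc02). }
    assert (CDK : forall z : R * R, continuous (fun z : R * R => DK (fst z) (snd z)) z).
    { intros z. unfold DK. apply cplus; apply cmult.
      - apply CXY. exact (proj2 (proj2 CK) 0%nat).
      - apply CS1.
      - apply CXY. exact (proj2 (proj2 CK) 1%nat).
      - apply CS2. }
    assert (CQQ : forall z : R * R, continuous (fun z : R * R => QQ (fst z) (snd z)) z).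
    { intros z. unfold QQ. apply cmult.
      - apply (CXY (fun x y t => / rho x y t)). apply cont3_inv; [exact (proj1 Cr)|exact Hr].
      - apply cplus; apply cmult.
        + apply CXY. exact (proj2 (proj2 Cpt) 0%nat).
        + apply CS1.
        + apply CXY. exact (proj2 (proj2 Cpt) 1%nat).
        + apply CS2. }
    transitivity (RInt (fun s => DK t0 s - QQ t0 s) 0 1).
    { apply RInt_ext. intros s _. cbv beta. rewrite EDG.
      match goal with |- ?a = ?b => change (@eq R a b) end.
      unfold Gn, Af1, Af2, DK, QQ. ring. }
    transitivity (RInt (fun s => DK t0 s) 0 1 - RInt (fun s => QQ t0 s) 0 1).
    { apply (RInt_minus (V := R_CompleteNormedModule) (fun s => DK t0 s) (fun s => QQ t0 s) 0 1).
      - apply (@ex_RInt_continuous R_CompleteNormedModule). intros s _.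
        apply (cont_slice DK t0 s). apply CDK.
      - apply (@ex_RInt_continuous R_CompleteNormedModule). intros s _.
        apply (cont_slice QQ t0 s). apply CQQ. }
    assert (EK : RInt (fun s => DK t0 s) 0 1 = kk 1 - kk 0).
    { transitivity (RInt (Derive kk) 0 1).
      - apply RInt_ext. intros s _. symmetry. apply is_derive_unique. apply HK.
      - apply RInt_Derive.
        + intros x _. exists (DK t0 x). apply HK.
        + intros x _. apply (continuous_ext (fun s => DK t0 s)).
          * intros s. symmetry. apply is_derive_unique. apply HK.
          * apply (cont_slice DK t0 x). apply CDK. }
    assert (EQ : RInt (fun s => QQ t0 s) 0 1 = RInt (fun s =>
      / rho (phi1 (c01 s) (c02 s) t0) (phi2 (c01 s) (c02 s) t0) t0
      * Derive (fun r => ptf rhoref Fr2 p zeta (phi1 (c01 r) (c02 r) t0) (phi2 (c01 r) (c02 r) t0) t0) s) 0 1).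
    { apply RInt_ext. intros s _. symmetry. apply HQ. }
    assert (Hk : kk 1 = kk 0).
    { unfold kk. rewrite <- (proj1 Hclosed), <- (proj2 Hclosed). reflexivity. }
    rewrite EK, EQ, Hk. ring.
Qed.
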